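(* For every positive integer $d$, there exists a binary matrix $M$ such that $R_{bool}(M)=4d$ and $R_{\mathbb{R}}(M)=3d$.
   Context: $R_{\mathbb{R}}$ is the usual rank over the reals. For a binary $n\times m$ matrix $M$, the boolean rank $R_{bool}(M)$ is the least $k$ such that $M=UV$ with $U\in\{0,1\}^{n\times k}$, $V\in\{0,1\}^{k\times m}$, where the product is computed in the Boolean semiring ($1+1=1$), equivalently the minimum number of all-ones combinatorial rectangles (submatrices) needed to cover the $1$-entries of $M$. *)

(* Defs.v *)
From mathcomp Require Import all_boot all_order all_algebra.
From mathcomp Require Import Rstruct.
From Stdlib Require Rdefinitions.
Set Implicit Arguments. Unset Strict Implicit. Unset Printing Implicit Defensive.
Import GRing.Theory.
Local Open Scope ring_scope.

Definition bool_mulmx (n k m : nat) (U : 'M[bool]_(n, k)) (V : 'M[bool]_(k, m))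
  : 'M[bool]_(n, m) :=
  \matrix_(i < n, j < m) [exists l : 'I_k, U i l && V l j].

Definition bool_factorizable (n m : nat) (M : 'M[bool]_(n, m)) (k : nat) : Prop :=
  exists (U : 'M[bool]_(n, k)) (V : 'M[bool]_(k, m)), M = bool_mulmx U V.

Definition bool_rank_is (n m : nat) (M : 'M[bool]_(n, m)) (r : nat) : Prop :=
  bool_factorizable M r /\ forall k, bool_factorizable M k -> (r <= k)%N.

Definition real_of_bmx (n m : nat) (M : 'M[bool]_(n, m)) : 'M[Rdefinitions.R]_(n, m) :=
  map_mx (fun b : bool => (b : nat)%:R) M.

Definition real_rank (n m : nat) (M : 'M[bool]_(n, m)) : nat :=
  \rank (real_of_bmx M).

(* Main.v *)
Require Import Defs.
From mathcomp Require Import all_boot all_order all_algebra.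
From mathcomp Require Import Rstruct.
From mathcomp Require Import ring.
Set Implicit Arguments. Unset Strict Implicit. Unset Printing Implicit Defensive.
Import GRing.Theory.

Definition fooling (n m : nat) (M : 'M[bool]_(n, m)) (r : nat) : Prop :=
  exists (f : 'I_r -> 'I_n) (g : 'I_r -> 'I_m),
    (forall a, M (f a) (g a)) /\
    (forall a b, a != b -> ~~ (M (f a) (g b) && M (f b) (g a))).

Definition Pm (n m : nat) (M : 'M[bool]_(n, m)) (r q : nat) : Prop :=
  [/\ bool_factorizable M r, fooling M r & real_rank M = q].

Lemma fool_lower n m (M : 'M[bool]_(n, m)) r k :
  fooling M r -> bool_factorizable M k -> (r <= k)%N.
Proof.
move=> [f [g [Hd Ho]]] [U [V EM]].
have : forall a : 'I_r, exists l : 'I_k, U (f a) l && V l (g a).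
  move=> a; have := Hd a; rewrite EM mxE => /existsP [l Hl]; by exists l.
case/fin_all_exists => h Hh.
have inj : injective h.
  move=> a b Hab; apply/eqP; apply: contraT => Hne.
  have := Ho a b Hne; rewrite EM !mxE.
  case/andP: (Hh a) => Ha1 Ha2; case/andP: (Hh b) => Hb1 Hb2.
  rewrite -Hab in Hb1 Hb2.
  have -> : [exists l, U (f a) l && V l (g b)] by apply/existsP; exists (h a); rewrite Ha1 Hb2.
  by have -> : [exists l, U (f b) l && V l (g a)] by apply/existsP; exists (h a); rewrite Hb1 Ha2.
by have := leq_card _ inj; rewrite !card_ord.
Qed.

Lemma exists_split r1 r2 (F : 'I_(r1 + r2) -> bool) :
  [exists l, F l] = [exists l, F (lshift r2 l)] || [exists l, F (rshift r1 l)].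
Proof.
apply/idP/idP.
- case/existsP => l Hl.
  by case: (split_ordP l) => l' E; subst l; apply/orP; [left|right]; apply/existsP; exists l'.
- case/orP => /existsP [l Hl]; apply/existsP; by [exists (lshift r2 l) | exists (rshift r1 l)].
Qed.

Lemma splitL m n (i : 'I_m) : split (lshift n i) = inl i.
Proof. exact: (unsplitK (inl i)). Qed.
Lemma splitR m n (i : 'I_n) : split (rshift m i) = inr i.
Proof. exact: (unsplitK (inr i)). Qed.

Lemma ex_false (T : finType) : [exists x : T, false] = false.
Proof. by apply/existsP => [[]]. Qed.

Definition bdiag n1 m1 n2 m2 (A : 'M[bool]_(n1, m1)) (B : 'M[bool]_(n2, m2)) :=
  block_mx A (const_mx false) (const_mx false) B.

Lemma Pm_block n1 m1 n2 m2 (A : 'M[bool]_(n1, m1)) (B : 'M[bool]_(n2, m2)) r1 q1 r2 q2 :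
  Pm A r1 q1 -> Pm B r2 q2 -> Pm (bdiag A B) (r1 + r2) (q1 + q2).
Proof.
move=> [[U1 [V1 E1]] [f1 [g1 [Hd1 Ho1]]] R1] [[U2 [V2 E2]] [f2 [g2 [Hd2 Ho2]]] R2].
split.
- exists (bdiag U1 U2), (bdiag V1 V2).
  apply/matrixP => i j.
  rewrite /bdiag.
  case: (split_ordP i) => i' ->; case: (split_ordP j) => j' ->;
   rewrite ?block_mxEul ?block_mxEur ?block_mxEdl ?block_mxEdr [in RHS]mxE exists_split;
   (under eq_existsb => l do rewrite ?block_mxEul ?block_mxEur ?block_mxEdl ?block_mxEdr ?mxE ?andbF ?andFb);
   (under [X in _ || X]eq_existsb => l do rewrite ?block_mxEul ?block_mxEur ?block_mxEdl ?block_mxEdr ?mxE ?andbF ?andFb);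
   rewrite ?E1 ?E2 ?mxE ?ex_false ?orbF ?orFb //.
- exists (fun a => match split a with inl a1 => lshift n2 (f1 a1) | inr a2 => rshift n1 (f2 a2) end).
  exists (fun a => match split a with inl a1 => lshift m2 (g1 a1) | inr a2 => rshift m1 (g2 a2) end).
  split.
  + move=> a; case: (split_ordP a) => a' _; rewrite ?splitL ?splitR /bdiag
      ?block_mxEul ?block_mxEur ?block_mxEdl ?block_mxEdr; by [apply: Hd1 | apply: Hd2].
  + move=> a b; case: (split_ordP a) => a' ->; case: (split_ordP b) => b' ->;
      rewrite ?splitL ?splitR /bdiag ?eq_shift
      ?block_mxEul ?block_mxEur ?block_mxEdl ?block_mxEdr ?mxE ?andbF //.
    * exact: Ho1.
    * exact: Ho2.
- rewrite /real_rank /real_of_bmx /bdiag map_block_mx !map_const_mx -R1 -R2.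
  exact: rank_diag_block_mx.
Qed.

Local Open Scope ring_scope.
Definition m0n (i j : nat) : bool := (j == i) || (j == (if i == 3%N then 0%N else i.+1)).
Definition M0 : 'M[bool]_(4,4) := \matrix_(i, j) m0n i j.
Definition RR := Rdefinitions.R.
Definition tab (l : seq (seq RR)) (i j : nat) : RR := nth 0 (nth [::] l i) j.
Definition Bm : 'M[RR]_(4,3) := \matrix_(i, j) tab [:: [:: 1; 0; 0]; [:: 0; 1; 0]; [:: 0; 0; 1]; [:: 1; -1; 1]] i j.
Definition Cm : 'M[RR]_(3,4) := \matrix_(i, j) ((m0n i j : nat)%:R).
Definition Xm : 'M[RR]_(3,4) := \matrix_(i, j) ((i == j :> nat : nat)%:R).
Definition Ym : 'M[RR]_(4,3) := \matrix_(i, j) tab [:: [:: 1; -1; 1]; [:: 0; 1; -1]; [:: 0; 0; 1]; [:: 0; 0; 0]] i j.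

Lemma A_fact : real_of_bmx M0 = Bm *m Cm.
Proof.
apply/matrixP => i j; rewrite !mxE !big_ord_recr big_ord0 /= !mxE.
case: i => [[|[|[|[|i]]]] Hi] //; case: j => [[|[|[|[|j]]]] Hj] //=; rewrite /tab /=; ring.
Qed.

Lemma A_inv : Xm *m real_of_bmx M0 *m Ym = 1%:M.
Proof.
apply/matrixP => i j; rewrite !mxE !big_ord_recr big_ord0 /= !mxE.
rewrite !big_ord_recr !big_ord0 /= !mxE.
case: i => [[|[|[|i]]] Hi] //; case: j => [[|[|[|j]]] Hj] //=; rewrite /tab /=; ring.
Qed.

Lemma Pm_M0 : Pm M0 4 3.
Proof.
split.
- exists M0, (\matrix_(i, j) (i == j)).
  apply/matrixP => i j; rewrite !mxE; apply/idP/existsP.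
  + by move=> H; exists j; rewrite !mxE eqxx andbT.
  + by case=> l; rewrite !mxE => /andP [H /eqP <-].
- exists id, id; split.
  + by move=> a; rewrite mxE /m0n eqxx.
  + move=> a b; rewrite !mxE.
    by case: a => [[|[|[|[|a]]]] Ha] //; case: b => [[|[|[|[|b]]]] Hb].
- apply/eqP; rewrite eqn_leq; apply/andP; split.
  + by rewrite /real_rank A_fact; apply: leq_trans (mxrankM_maxr _ _) (rank_leq_row _).
  + rewrite /real_rank -{1}(mxrank1 RR 3) -A_inv.
    by apply: leq_trans (mxrankM_maxl _ _) _; apply: mxrankM_maxr.
Qed.

Local Close Scope ring_scope.
Lemma Pm_all d : exists (n m : nat) (M : 'M[bool]_(n, m)), Pm M (4 * d) (3 * d).
Proof.
elim: d => [|d [n [m [M HM]]]].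
- exists 0%N, 0%N, (const_mx false); split.
  + by exists (const_mx false), (const_mx false); apply/matrixP => [[]].
  + by exists id, id; split => [[]|[]].
  + by apply/eqP; rewrite -leqn0 /real_rank rank_leq_row.
- exists (4 + n)%N, (4 + m)%N, (bdiag M0 M).
  rewrite !mulnS; exact: Pm_block Pm_M0 HM.
Qed.

Theorem theorem4 (d : nat) : (0 < d)%N ->
  exists (n m : nat) (M : 'M[bool]_(n, m)),
    bool_rank_is M (4 * d) /\ real_rank M = (3 * d)%N.
Proof.
move=> _; have [n [m [M [Hf Hfool Hr]]]] := Pm_all d.
exists n, m, M; split => //; split => // k Hk.
exact: fool_lower Hfool Hk.
Qed.
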